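(* Let $n\ge 2$ and $1\le p\le n-1$. Let $a_{n,p}$ be the number of $\alpha\in\mathcal{OCT}_n$ with $F(\alpha)=\{1\}$ and $h(\alpha)=p$. Then $a_{n,p}$ also equals the number of $\alpha\in\mathcal{OCT}_n$ with $F(\alpha)=\{n\}$ and $h(\alpha)=p$, and $a_{n,p}=\binom{n-2}{p-1}$.
   Context: $X_n=\{1,2,\dots,n\}$ with its usual order; maps are written on the right ($x\alpha$). A map $\alpha:X_n\to X_n$ is order-preserving if $x\le y$ implies $x\alpha\le y\alpha$, and a contraction if $|x\alpha-y\alpha|\le|x-y|$ for all $x,y$. $\mathcal{OCT}_n$ is the set of all order-preserving contractions $X_n\to X_n$ (defined on all of $X_n$). For such $\alpha$: the height is $h(\alpha)=|\mathrm{Im}\,\alpha|$, and $F(\alpha)=\{x\in X_n:x\alpha=x\}$ is the set of fixed points. *)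

(* Defs.v *)
From mathcomp Require Import all_boot.
Set Implicit Arguments. Unset Strict Implicit. Unset Printing Implicit Defensive.

(* X_n = {1,...,n} is represented by 'I_n, the element i : 'I_n standing for i+1.
   This shift preserves order and distances, so order-preservation and the
   contraction property are unaffected. *)

Definition order_preserving n (a : {ffun 'I_n -> 'I_n}) : bool :=
  [forall x : 'I_n, forall y : 'I_n, (x <= y) ==> (a x <= a y)].

Definition contraction n (a : {ffun 'I_n -> 'I_n}) : bool :=
  [forall x : 'I_n, forall y : 'I_n,
     (maxn (a x) (a y) - minn (a x) (a y) <= maxn x y - minn x y)].

Definition OCT n : {set {ffun 'I_n -> 'I_n}} :=
  [set a | order_preserving a && contraction a].

Definition height n (a : {ffun 'I_n -> 'I_n}) : nat := #|[set a x | x : 'I_n]|.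

Definition fixpts n (a : {ffun 'I_n -> 'I_n}) : {set 'I_n} := [set x | a x == x].

(* Main.v *)
Require Import Defs.
From mathcomp Require Import all_boot.
From mathcomp Require Import zify.
Set Implicit Arguments. Unset Strict Implicit. Unset Printing Implicit Defensive.

Lemma OCTP n (a : {ffun 'I_n -> 'I_n}) :
  reflect (forall x y : 'I_n, x <= y -> a x <= a y <= a x + (y - x)) (a \in OCT n).
Proof.
rewrite inE /order_preserving /contraction.
apply: (iffP andP).
- case=> /forallP op /forallP ct x y xy.
  have := implyP ((forallP (op x)) y) xy.
  have := (forallP (ct x)) y. lia.
- move=> H; split; apply/forallP=> x; apply/forallP=> y.
  + apply/implyP=> xy; by case/andP: (H x y xy).
  + case: (leqP x y) => xy.
    * have := H x y xy. lia.
    * have := H y x (ltnW xy). lia.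
Qed.

Lemma OCT_local n (a : {ffun 'I_n.+1 -> 'I_n.+1}) :
  (forall x, x < n -> a (inord x) <= a (inord x.+1) <= a (inord x) + 1) ->
  a \in OCT n.+1.
Proof.
move=> H; apply/OCTP => x y xy.
have Hg : forall k z, z + k <= n ->
    a (inord z) <= a (inord (z + k)) <= a (inord z) + k.
  elim=> [|k IH] z hz; first by rewrite !addn0 leqnn.
  have h1 : z + k <= n by lia.
  have h2 : z + k < n by lia.
  have := IH z h1. have := H (z + k) h2.
  rewrite (addnS z k). lia.
have := Hg (y - x) x.
rewrite subnKC // !inord_val; apply; exact: leq_ord.
Qed.

Lemma OCT_step n (a : {ffun 'I_n.+1 -> 'I_n.+1}) x : a \in OCT n.+1 -> x < n ->
  a (inord x) <= a (inord x.+1) <= a (inord x) + 1.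
Proof.
move=> /OCTP H hx.
have := H (inord x) (inord x.+1).
rewrite !inordK ?ltnS //; last by apply: ltnW.
by rewrite subSn // subnn; apply.
Qed.

Lemma ord0E n : (ord0 : 'I_n.+1) = inord 0.
Proof. by apply: val_inj; rewrite /= inordK. Qed.

Lemma fix0 m (a : {ffun 'I_m.+2 -> 'I_m.+2}) : a \in OCT m.+2 ->
  (fixpts a == [set ord0]) = (val (a ord0) == 0) && (val (a (inord 1)) == 0).
Proof.
move=> aO; apply/eqP/andP.
- move=> F.
  have h0 : ord0 \in fixpts a by rewrite F inE.
  have h1 : inord 1 \notin fixpts a.
    by rewrite F inE -(inj_eq val_inj) /= inordK.
  move: h0 h1; rewrite !inE -!(inj_eq val_inj) /= inordK // => /eqP h0 h1.
  have := OCT_step (x:=0) aO (ltn0Sn _).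
  rewrite -ord0E h0. move: h1. lia.
- case=> /eqP h0 /eqP h1; apply/setP=> x; rewrite !inE -!(inj_eq val_inj) /=.
  case: x => [[|x] hx] /=; first by apply/eqP; rewrite (_ : Ordinal hx = ord0) //; apply: val_inj.
  move/OCTP: aO => /(_ (inord 1) (Ordinal hx)) /=.
  rewrite inordK // h1 => /(_ isT). lia.
Qed.

Lemma card_le n c : c <= n -> #|[set y : 'I_n.+1 | y <= c]| = c.+1.
Proof.
move=> hc.
have -> : [set y : 'I_n.+1 | y <= c] = widen_ord (hc : c.+1 <= n.+1) @: setT.
  apply/setP=> y; rewrite inE; apply/idP/imsetP.
  - move=> hy; exists (Ordinal (hy : y < c.+1)) => //; exact: val_inj.
  - by case=> z _ ->; rewrite /= -ltnS.
by rewrite card_imset ?cardsT ?card_ord //; by move=> u v /(congr1 val) /= e; apply: val_inj.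
Qed.

Lemma height_val n (a : {ffun 'I_n.+1 -> 'I_n.+1}) : a \in OCT n.+1 ->
  val (a ord0) = 0 -> height a = (a ord_max).+1.
Proof.
move=> aO h0; rewrite /height -(card_le (leq_ord (a ord_max))).
apply: eq_card => y; rewrite [RHS]inE; apply/imsetP/idP.
- case=> x _ ->. by case/andP: (OCTP _ aO x ord_max (leq_ord x)).
- move=> hy.
  have ivt : forall k, k <= n -> forall z, z <= a (inord k) ->
      exists x : 'I_n.+1, val (a x) = z.
    elim=> [|k IH] hk z hz.
      exists ord0; move: hz; rewrite -ord0E /=; move: h0 => /= h0. lia.
    case: (leqP z (a (inord k))) => hzk; first exact: IH (ltnW hk) z hzk.
    exists (inord k.+1). have := OCT_step (x:=k) aO hk. rewrite /=. lia.
  have hm : inord n = ord_max :> 'I_n.+1 by apply: val_inj; rewrite /= inordK.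
  have [x hx] := ivt n (leqnn n) y ltac:(by rewrite hm).
  by exists x => //; apply: val_inj.
Qed.

Fixpoint G (P : nat -> bool) x :=
  if x is y.+1 then G P y + (if y is z.+1 then P z else false) else 0.

Lemma G_le P x : G P x <= x.-1.
Proof.
elim: x => [|[|x] IH] //=. move: IH => /=; case: (P x) => /=; lia.
Qed.

Lemma G_sum P k : G P k.+1 = \sum_(j < k) P j.
Proof.
elim: k => [|k IH]; first by rewrite big_ord0.
by rewrite big_ord_recr /= -IH.
Qed.

Definition Pr m (A : {set 'I_m}) (z : nat) := [exists j in A, val j == z].

Lemma PrE m (A : {set 'I_m}) (i : 'I_m) : Pr A i = (i \in A).
Proof.
apply/existsP/idP => [[j /andP[jA /eqP e]]|iA]; first by rewrite -(val_inj e).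
by exists i; rewrite iA eqxx.
Qed.

Definition alpha m (A : {set 'I_m}) : {ffun 'I_m.+2 -> 'I_m.+2} :=
  [ffun x : 'I_m.+2 => inord (G (Pr A) x)].

Lemma alphaE m (A : {set 'I_m}) (x : 'I_m.+2) : val (alpha A x) = G (Pr A) x.
Proof.
rewrite ffunE /= inordK //. have := G_le (Pr A) x. have := ltn_ord x. lia.
Qed.

Lemma alphaEn m (A : {set 'I_m}) k : k <= m.+1 -> val (alpha A (inord k)) = G (Pr A) k.
Proof. by move=> hk; rewrite alphaE inordK. Qed.

Lemma alpha_inj m : injective (@alpha m).
Proof.
move=> A B e; apply/setP=> i.
have e2 : G (Pr A) i.+2 = G (Pr B) i.+2.
  by rewrite -!alphaEn ?e // ltnS ltn_ord.
have e1 : G (Pr A) i.+1 = G (Pr B) i.+1.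
  by rewrite -!alphaEn ?e // ltnS ltnW.
move: e2; rewrite /= -/(G (Pr A) i.+1) -/(G (Pr B) i.+1) e1 => /addnI.
rewrite !PrE; by case: (i \in A); case: (i \in B).
Qed.

Lemma alpha_OCT m (A : {set 'I_m}) : alpha A \in OCT m.+2.
Proof.
apply: OCT_local => x hx; rewrite !alphaEn //; last exact: ltnW.
rewrite /=; case: x hx => [|x] hx /=; first by rewrite addn0.
case: (Pr A x) => /=; lia.
Qed.

Lemma alpha_card m (A : {set 'I_m}) : G (Pr A) m.+1 = #|A|.
Proof.
rewrite G_sum. under eq_bigr => j _ do rewrite PrE.
rewrite -sum1_card [RHS]big_mkcond /=; apply: eq_bigr => j _; by case: (j \in A).
Qed.

Lemma count0 m p (hp1 : 1 <= p) :
  #|[set a in OCT m.+2 | (fixpts a == [set ord0]) && (height a == p)]| = 'C(m, p - 1).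
Proof.
have -> : [set a in OCT m.+2 | (fixpts a == [set ord0]) && (height a == p)] =
          (@alpha m) @: [set A : {set 'I_m} | #|A| == p - 1].
  apply/setP=> a; rewrite inE; apply/idP/imsetP.
  - case/and3P=> aO hf hh.
    move: hf; rewrite fix0 // => /andP[/eqP f0 /eqP f1].
    pose A := [set i : 'I_m | val (a (inord i.+2)) != val (a (inord i.+1))].
    have key : forall x, x <= m.+1 -> val (a (inord x)) = G (Pr A) x.
      elim=> [|x IH] hx; first by rewrite -ord0E f0.
      rewrite /= -IH; last exact: ltnW.
      case: x IH hx => [|x] IH hx; first by rewrite f1 -ord0E f0.
      have hxm : x < m by [].
      rewrite (PrE A (Ordinal hxm)) inE /=.
      have := OCT_step (x:=x.+1) aO hx.
      case: eqP => /= e; lia.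
    have ea : a = alpha A.
      apply/ffunP=> x; apply: val_inj; rewrite alphaE -key ?inord_val //; exact: leq_ord.
    exists A => //; rewrite inE.
    move: hh; rewrite height_val -?ord0E ?f0 //.
    rewrite (_ : ord_max = inord m.+1); last by apply: val_inj; rewrite /= inordK.
    rewrite key // alpha_card. lia.
  - case=> A; rewrite inE => /eqP hA ->.
    rewrite alpha_OCT fix0 ?alpha_OCT // alphaE alphaEn // /=.
    rewrite height_val ?alpha_OCT //; last by rewrite alphaE.
    rewrite (alphaE A ord_max) alpha_card hA; lia.
apply: eq_trans (card_imset _ (@alpha_inj m)) _.
by rewrite card_draws card_ord.
Qed.

Definition rv n (a : {ffun 'I_n -> 'I_n}) : {ffun 'I_n -> 'I_n} :=
  [ffun x => rev_ord (a (rev_ord x))].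

Lemma rvK n : cancel (@rv n) (@rv n).
Proof. by move=> a; apply/ffunP=> x; rewrite !ffunE !rev_ordK. Qed.

Lemma rv_OCT1 n (a : {ffun 'I_n -> 'I_n}) : a \in OCT n -> rv a \in OCT n.
Proof.
move=> /OCTP H; apply/OCTP => x y xy; rewrite !ffunE /=.
have hr : rev_ord y <= rev_ord x by rewrite /=; have := ltn_ord x; have := ltn_ord y; lia.
have := H _ _ hr; rewrite /=.
have := ltn_ord x; have := ltn_ord y; have := ltn_ord (a (rev_ord x)); have := ltn_ord (a (rev_ord y)).
lia.
Qed.

Lemma rv_OCT n (a : {ffun 'I_n -> 'I_n}) : (rv a \in OCT n) = (a \in OCT n).
Proof.
apply/idP/idP; last exact: rv_OCT1.
by move/rv_OCT1; rewrite rvK.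
Qed.

Lemma rv_height n (a : {ffun 'I_n -> 'I_n}) : height (rv a) = height a.
Proof.
rewrite /height -[RHS](card_imset _ (@rev_ord_inj n)); apply: eq_card => y.
apply/imsetP/imsetP.
- case=> x _ ->; exists (a (rev_ord x)); first by apply/imsetP; exists (rev_ord x).
  by rewrite ffunE.
- case=> z /imsetP[x _ ->] ->; exists (rev_ord x) => //; by rewrite ffunE rev_ordK.
Qed.

Lemma rv_fix n (a : {ffun 'I_n.+1 -> 'I_n.+1}) :
  (fixpts (rv a) == [set ord0]) = (fixpts a == [set ord_max]).
Proof.
have key : forall x, (x \in fixpts (rv a)) = (rev_ord x \in fixpts a).
  by move=> x; rewrite !inE ffunE -(inj_eq (@rev_ord_inj _)) rev_ordK.
have r0 : forall x : 'I_n.+1, (rev_ord x == ord0) = (x == ord_max).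
  move=> x; rewrite -(inj_eq val_inj) -[x == _](inj_eq val_inj) /=.
  have := ltn_ord x; lia.
apply/eqP/eqP => H; apply/setP=> x.
- by rewrite -{1}(rev_ordK x) -key H !inE r0.
- by rewrite key H !inE -r0 rev_ordK.
Qed.

Theorem lemma2p2 (m p : nat) (hp1 : 1 <= p) (hp2 : p <= m.+1) :
  let n := m.+2 in
  #|[set a in OCT n | (fixpts a == [set ord0]) && (height a == p)]| =
  #|[set a in OCT n | (fixpts a == [set ord_max]) && (height a == p)]|
  /\
  #|[set a in OCT n | (fixpts a == [set ord0]) && (height a == p)]| =
  'C(n - 2, p - 1).
Proof.
move=> n; split; last by rewrite count0 // /n subn2.
rewrite -(card_imset _ (can_inj (@rvK n))) (can2_imset_pre _ (@rvK n) (@rvK n)).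
apply: eq_card => a; have h := rv_OCT a; rewrite !inE in h; by rewrite !inE h rv_fix rv_height.
Qed.
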